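(* Let $m,k,n\ge 1$ be integers; let $\lambda_i,\mu_i>0$ for $i\in\{1,\dots,k\}$ and $\alpha_j,\beta_j,u_j,v_j>0$ for $j\in\{1,\dots,n\}$; and let $\theta:\{0,\dots,m\}\to\mathbb{R}$ satisfy $0\le\theta(b)\le 1$ for all $b$, $\theta(b)>0$ for $b\in\{0,\dots,m-1\}$, and $\theta(m)=0$. Let $\mathcal{S}$ be the set of vectors $w=(x;a)=(x_1,\dots,x_k;a_1,\dots,a_n)$ with $x_i\in\mathbb{Z}_{\ge0}$, $a_j\in\{I,W,T\}$, and $\mathrm{busy}(w):=\sum_{i=1}^k x_i+\sum_{j=1}^n 1_{\{a_j=T\}}\le m$. Consider the CTMC on $\mathcal{S}$ whose only nonzero transition rates between states in $\mathcal{S}$ are: (i) $(x;a)\to(x+e_i;a)$ with rate $\lambda_i\theta(\mathrm{busy}(x;a))$ and $(x+e_i;a)\to(x;a)$ with rate $(x_i+1)\mu_i$, for each $i\in\{1,\dots,k\}$ ($e_i$ the $i$-th unit vector of length $k$); (ii) for each $j\in\{1,\dots,n\}$, changing only coordinate $a_j$: $I\to W$ with rate $\alpha_j$, $W\to I$ with rate $\beta_j$, $W\to T$ with rate $u_j\theta(\mathrm{busy}(w))$ where $w$ is the state before the transition, and $T\to W$ with rate $v_j$. Let $\rho_i=\lambda_i/\mu_i$. Then this CTMC is reversible and its steady state distribution is $$p(w)=B\cdot\Big(\prod_{r=0}^{\mathrm{busy}(w)-1}\theta(r)\Big)\Big(\prod_{i=1}^k\frac{\rho_i^{x_i}}{x_i!}\Big)\prod_{j=1}^n\Big(\frac{\alpha_j}{\beta_j}\Big)^{1_{\{a_j=W\}}}\Big(\frac{\alpha_ju_j}{\beta_jv_j}\Big)^{1_{\{a_j=T\}}}\qquad\forall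 w\in\mathcal{S},$$ where $B$ is the constant making the probabilities sum to $1$ and $\prod_{r=0}^{-1}\theta(r)=1$.
   Context: This models an access point with $m$ channels, $k$ classes of non-persistent users ($x_i$ = number of class $i$ users transmitting) and $n$ persistent users, each in activity state Idle ($I$), Waiting ($W$) or Transmitting ($T$); an access attempt made when $b$ channels are busy succeeds with probability $\theta(b)$. A CTMC is reversible if there is a probability mass function $p$ with $p(w)q_{w,z}=p(z)q_{z,w}$ for all states $w,z$. *)

(* Defs.v *)
From HB Require Import structures.
From mathcomp Require Import all_boot all_order all_algebra.
Set Implicit Arguments. Unset Strict Implicit. Unset Printing Implicit Defensive.
Import Order.TTheory GRing.Theory Num.Theory.
Local Open Scope ring_scope.

Inductive act := Idle | Wait | Trans.

Definition act_to_nat (a : act) : nat :=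
  match a with Idle => 0 | Wait => 1 | Trans => 2 end.
Definition nat_to_act (n : nat) : option act :=
  match n with 0 => Some Idle | 1 => Some Wait | 2 => Some Trans | _ => None end.
Lemma act_pcan : pcancel act_to_nat nat_to_act. Proof. by case. Qed.

HB.instance Definition _ := Equality.copy act (pcan_type act_pcan).
HB.instance Definition _ := Choice.copy act (pcan_type act_pcan).
HB.instance Definition _ := Countable.copy act (pcan_type act_pcan).
Definition act_enum := [:: Idle; Wait; Trans].
Lemma act_enumP : Finite.axiom act_enum. Proof. by case. Qed.
HB.instance Definition _ := isFinite.Build act act_enumP.

(* Since every state of S has busy(w) <= m, each
   x_i <= m, so we may take x_i in 'I_(m.+1) without losing any state of S;
   the state space S itself is carved out by the predicate [inS]. *)
Definition state (m k n : nat) :=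
  ({ffun 'I_k -> 'I_m.+1} * {ffun 'I_n -> act})%type.

Section Model.
Variables (m k n : nat).
Local Notation state := (state m k n).

Definition busy (w : state) : nat :=
  (\sum_(i < k) (w.1 i : nat) + \sum_(j < n) (w.2 j == Trans))%N.

Definition inS (w : state) : bool := (busy w <= m)%N.

Variable R : realFieldType.
Variables (theta : nat -> R) (lambda mu : 'I_k -> R) (alpha beta u v : 'I_n -> R).

Definition arrival (i : 'I_k) (w z : state) : bool :=
  [forall l, (z.1 l : nat) == (w.1 l + (l == i))%N] && (z.2 == w.2).

Definition act_rate (j : 'I_n) (w : state) (b c : act) : R :=
  match b, c with
  | Idle, Wait => alpha j
  | Wait, Idle => beta j
  | Wait, Trans => u j * theta (busy w)
  | Trans, Wait => v j
  | _, _ => 0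
  end.

Definition act_move (j : 'I_n) (w z : state) : bool :=
  (z.1 == w.1) && [forall l, (l != j) ==> (z.2 l == w.2 l)].

Definition rate (w z : state) : R :=
  \sum_(i < k) ((if arrival i w z then lambda i * theta (busy w) else 0)
              + (if arrival i z w then (w.1 i : nat)%:R * mu i else 0))
  + \sum_(j < n) (if act_move j w z then act_rate j w (w.2 j) (z.2 j) else 0).

Definition is_pmf (p : state -> R) : Prop :=
  (forall w, inS w -> 0 <= p w) /\ \sum_(w | inS w) p w = 1.

Definition reversible : Prop :=
  exists p : state -> R, is_pmf p /\
    forall w z, inS w -> inS z -> p w * rate w z = p z * rate z w.

Definition stationary (p : state -> R) : Prop :=
  is_pmf p /\
  forall w, inS w ->
    p w * (\sum_(z | inS z && (z != w)) rate w z)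
    = \sum_(z | inS z && (z != w)) p z * rate z w.

Definition weight (w : state) : R :=
  (\prod_(r < busy w) theta r)
  * (\prod_(i < k) ((lambda i / mu i) ^+ (w.1 i) / ((w.1 i)`!)%:R))
  * (\prod_(j < n) ((if w.2 j == Wait then alpha j / beta j else 1)
                   * (if w.2 j == Trans then (alpha j * u j) / (beta j * v j) else 1))).

Definition normconst : R := (\sum_(w | inS w) weight w)^-1.

End Model.

(* Main.v *)
Require Import Defs.
From mathcomp Require Import all_boot all_order all_algebra.
From mathcomp Require Import ring lra zify.
Import Order.TTheory GRing.Theory Num.Theory.
Local Open Scope ring_scope.

Lemma swap1 (T : Type) (idx : T) (op : Monoid.com_law idx) (I : finType) (i : I)
  (f g : I -> T) : (forall l, l != i -> f l = g l) ->
  op (\big[op/idx]_l f l) (g i) = op (\big[op/idx]_l g l) (f i).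
Proof.
move=> H; rewrite (bigD1 i) //= (bigD1 i (F := g)) //=.
rewrite (eq_bigr g); last by move=> l /H.
rewrite Monoid.mulmAC [RHS]Monoid.mulmAC; congr (op _ _); exact: Monoid.mulmC.
Qed.

Lemma swap1n (I : finType) (i : I) (f g : I -> nat) : (forall l, l != i -> f l = g l) ->
  (\sum_l f l + g i = \sum_l g l + f i)%N.
Proof. exact: (@swap1 nat 0%N addn). Qed.

Lemma swap1r (R : comRingType) (I : finType) (i : I) (f g : I -> R) : (forall l, l != i -> f l = g l) ->
  (\prod_l f l) * g i = (\prod_l g l) * f i.
Proof. exact: (@swap1 R 1 *%R). Qed.
Set Implicit Arguments. Unset Strict Implicit. Unset Printing Implicit Defensive.

Definition Pb (R : realFieldType) m k n (theta : nat -> R) (w : state m k n) : R :=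
  \prod_(r < busy w) theta r.
Definition Fx (R : realFieldType) k (lambda mu : 'I_k -> R) (i : 'I_k) (x : nat) : R :=
  (lambda i / mu i) ^+ x / (x`!)%:R.
Definition Gy (R : realFieldType) n (alpha beta u v : 'I_n -> R) (j : 'I_n) (a : act) : R :=
  (if a == Wait then alpha j / beta j else 1)
  * (if a == Trans then (alpha j * u j) / (beta j * v j) else 1).

Lemma weightE (R : realFieldType) m k n (theta : nat -> R) (lambda mu : 'I_k -> R)
  (alpha beta u v : 'I_n -> R) (w : state m k n) :
  weight theta lambda mu alpha beta u v w =
  Pb theta w * \prod_i Fx lambda mu i (w.1 i) * \prod_j Gy alpha beta u v j (w.2 j).
Proof. by []. Qed.

Lemma arrival_busy m k n (i : 'I_k) (w z : state m k n) :
  arrival i w z -> busy z = (busy w).+1 /\ (z.1 i = (w.1 i).+1 :> nat)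
     /\ (forall l, l != i -> z.1 l = w.1 l :> nat) /\ z.2 = w.2.
Proof.
move=> /andP[/forallP H /eqP E].
have Hl : forall l, l != i -> z.1 l = w.1 l :> nat.
  by move=> l /negbTE li; move: (H l); rewrite li addn0 => /eqP.
have Hi : z.1 i = (w.1 i).+1 :> nat by move: (H i); rewrite eqxx addn1 => /eqP.
split; last by [].
rewrite /busy E.
have := @swap1n _ i (fun l => (z.1 l : nat)) (fun l => (w.1 l : nat)) Hl.
rewrite Hi /= => HH.
rewrite addnS -addSn in HH; rewrite (addIn HH).
by rewrite addSn.
Qed.

Lemma AD (R : realFieldType) m k n (theta : nat -> R) (lambda mu : 'I_k -> R)
  (alpha beta u v : 'I_n -> R) (i : 'I_k) (w z : state m k n) :
  lambda i != 0 -> mu i != 0 ->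
  arrival i w z ->
  weight theta lambda mu alpha beta u v w * (lambda i * theta (busy w))
  = weight theta lambda mu alpha beta u v z * ((z.1 i : nat)%:R * mu i).
Proof.
move=> l0 m0 /arrival_busy[Hb [Hi [Hl E]]].
rewrite !weightE /Pb Hb big_ord_recr /= E.
have := @swap1r R _ i (fun l => Fx lambda mu l (z.1 l)) (fun l => Fx lambda mu l (w.1 l))
   (fun l hl => congr1 _ (Hl l hl)).
rewrite /= Hi.
set Xz := \prod_i0 _. set Xw := \prod_i0 _.
have F0 : Fx lambda mu i (w.1 i) != 0.
  by rewrite /Fx mulf_neq0 ?invr_eq0 ?pnatr_eq0 -?lt0n ?fact_gt0 // expf_neq0 // mulf_neq0 ?invr_eq0.
move=> HX.
have -> : Xz = Xw * Fx lambda mu i (w.1 i).+1 / Fx lambda mu i (w.1 i).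
  by rewrite -HX mulfK.
rewrite /Fx factS natrM exprS.
set x := w.1 i.
have xf : (x`!)%:R != 0 :> R by rewrite pnatr_eq0 -lt0n fact_gt0.
have x1 : (x.+1)%:R != 0 :> R by rewrite pnatr_eq0.
have rx : (lambda i / mu i) ^+ x != 0 by rewrite expf_neq0 // mulf_neq0 ?invr_eq0.
field.
by rewrite nat1r xf rx x1 m0.
Qed.

Lemma act_move_sym m k n (j : 'I_n) (w z : state m k n) : act_move j w z = act_move j z w.
Proof.
rewrite /act_move [w.1 == _]eq_sym.
by apply/idP/idP => /andP[-> /forallP H]; apply/forallP => l; rewrite [X in _ ==> X]eq_sym; exact: H.
Qed.

Lemma M (R : realFieldType) m k n (theta : nat -> R) (lambda mu : 'I_k -> R)
  (alpha beta u v : 'I_n -> R) (j : 'I_n) (w z : state m k n) :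
  alpha j != 0 -> beta j != 0 -> u j != 0 -> v j != 0 ->
  act_move j w z ->
  weight theta lambda mu alpha beta u v w * act_rate theta alpha beta u v j w (w.2 j) (z.2 j)
  = weight theta lambda mu alpha beta u v z * act_rate theta alpha beta u v j z (z.2 j) (w.2 j).
Proof.
move=> a0 b0 u0 v0 /andP[/eqP E1 /forallP H].
have Hl : forall l, l != j -> z.2 l = w.2 l by move=> l lj; move: (H l); rewrite lj => /eqP.
have HB := @swap1n _ j (fun l => (z.2 l == Trans : nat)) (fun l => (w.2 l == Trans : nat))
   (fun l hl => congr1 (fun a => (a == Trans : nat)) (Hl l hl)).
have HY := @swap1r R _ j (fun l => Gy alpha beta u v l (z.2 l)) (fun l => Gy alpha beta u v l (w.2 l))
   (fun l hl => congr1 _ (Hl l hl)).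
rewrite !weightE E1 /Pb.
have HB' : (busy z + (w.2 j == Trans) = busy w + (z.2 j == Trans))%N.
  by rewrite /busy E1 -!addnA /= HB.
clear HB; move: HB' HY => /=.
set Yz := \prod_i _. set Yw := \prod_i _.
rewrite /Gy /act_rate.
case: (w.2 j); case: (z.2 j) => //= HB HY; rewrite ?mulr0 //.
- have -> : busy z = busy w by lia.
  move: HY; rewrite !mulr1 => ->; field; by rewrite b0.
- have -> : busy z = busy w by lia.
  move: HY; rewrite !mulr1 => <-; field; by rewrite b0.
- have -> : busy z = (busy w).+1 by lia.
  rewrite big_ord_recr /=.
  have ab : alpha j / beta j * 1 != 0 by rewrite mulr1 mulf_neq0 ?invr_eq0.
  have -> : Yz = Yz * (alpha j / beta j * 1) / (alpha j / beta j * 1) by rewrite mulfK.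
  rewrite HY; field; by rewrite a0 b0 v0.
- have -> : busy w = (busy z).+1 by lia.
  rewrite big_ord_recr /=.
  have ab : alpha j / beta j * 1 != 0 by rewrite mulr1 mulf_neq0 ?invr_eq0.
  have -> : Yw = Yw * (alpha j / beta j * 1) / (alpha j / beta j * 1) by rewrite mulfK.
  rewrite -HY; field; by rewrite a0 b0 v0.
Qed.

Lemma DB (R : realFieldType) m k n (theta : nat -> R) (lambda mu : 'I_k -> R)
  (alpha beta u v : 'I_n -> R) (w z : state m k n) :
  (forall i, lambda i != 0) -> (forall i, mu i != 0) ->
  (forall j, alpha j != 0) -> (forall j, beta j != 0) ->
  (forall j, u j != 0) -> (forall j, v j != 0) ->
  weight theta lambda mu alpha beta u v w * rate theta lambda mu alpha beta u v w z
  = weight theta lambda mu alpha beta u v z * rate theta lambda mu alpha beta u v z w.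
Proof.
move=> l0 m0 a0 b0 u0 v0.
rewrite /rate !mulrDr !mulr_sumr; congr (_ + _); apply: eq_bigr => i _.
- rewrite !mulrDr [RHS]addrC; congr (_ + _).
  + case: ifP => h; last by rewrite !mulr0.
    exact: AD.
  + case: ifP => h; last by rewrite !mulr0.
    by rewrite (AD _ _ _ _ _ _ _ h).
- rewrite [act_move i z w]act_move_sym; case: ifP => h; last by rewrite !mulr0.
  exact: M.
Qed.
Lemma act_sum m k n (j : 'I_n) (w z : state m k n) (f : act -> nat) :
  act_move j w z ->
  (\sum_(l < n) f (z.2 l) + f (w.2 j) = \sum_(l < n) f (w.2 l) + f (z.2 j))%N.
Proof.
move=> /andP[_ /forallP H]; apply: (@swap1n _ j (fun l => f (z.2 l)) (fun l => f (w.2 l))).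
by move=> l lj; move: (H l); rewrite lj => /eqP ->.
Qed.

Lemma act_busy m k n (j : 'I_n) (w z : state m k n) :
  act_move j w z -> (busy z + (w.2 j == Trans) = busy w + (z.2 j == Trans))%N.
Proof.
move=> h; have := act_sum (fun a => (a == Trans : nat)) h.
move: h => /andP[/eqP E _]; rewrite /busy E -!addnA => ->; done.
Qed.

Section Main.
Variables (m k n : nat) (R : realFieldType).
Variables (theta : nat -> R) (lambda mu : 'I_k -> R) (alpha beta u v : 'I_n -> R).
Hypotheses (lp : forall i, 0 < lambda i) (mp : forall i, 0 < mu i)
  (ap : forall j, 0 < alpha j) (bp : forall j, 0 < beta j)
  (up : forall j, 0 < u j) (vp : forall j, 0 < v j)
  (th01 : forall b, (b <= m)%N -> 0 <= theta b <= 1)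
  (thp : forall b, (b < m)%N -> 0 < theta b).

Local Notation state := (state m k n).
Local Notation wt := (weight theta lambda mu alpha beta u v).
Local Notation q := (rate theta lambda mu alpha beta u v).

Lemma wt_gt0 (w : state) : inS w -> 0 < wt w.
Proof.
move=> Sw; rewrite weightE /Pb.
apply: mulr_gt0; first apply: mulr_gt0.
- apply: prodr_gt0 => r _; apply: thp; exact: leq_trans (ltn_ord r) Sw.
- apply: prodr_gt0 => i _; rewrite /Fx divr_gt0 ?exprn_gt0 ?divr_gt0 //.
  by rewrite ltr0n fact_gt0.
- apply: prodr_gt0 => j _; rewrite /Gy.
  apply: mulr_gt0; case: ifP => _ //; rewrite ?divr_gt0 ?mulr_gt0 //.
Qed.

Lemma act_rate_ge0 (w : state) j a b : inS w -> 0 <= act_rate theta alpha beta u v j w a b.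
Proof.
move=> Sw; have /andP[t0 _] := th01 Sw.
by case: a; case: b => //=; rewrite ?mulr_ge0 ?(ltW (ap j)) ?(ltW (bp j)) ?(ltW (up j)) ?(ltW (vp j)).
Qed.

Lemma rate_terms_ge0 (w z : state) : inS w ->
  (forall i, 0 <= (if arrival i w z then lambda i * theta (busy w) else 0)) /\
  (forall i, 0 <= (if arrival i z w then (w.1 i : nat)%:R * mu i else 0)) /\
  (forall j, 0 <= (if act_move j w z then act_rate theta alpha beta u v j w (w.2 j) (z.2 j) else 0)).
Proof.
move=> Sw; have /andP[t0 _] := th01 Sw.
split; [|split] => x; case: ifP => _ //.
- by rewrite mulr_ge0 ?(ltW (lp x)).
- by rewrite mulr_ge0 ?(ltW (mp x)).
- exact: act_rate_ge0.
Qed.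

Lemma rate_ge0 (w z : state) : inS w -> 0 <= q w z.
Proof.
move=> Sw; have [h1 [h2 h3]] := rate_terms_ge0 z Sw.
by rewrite addr_ge0 // sumr_ge0 // => i _; rewrite addr_ge0.
Qed.

Lemma rate_geD (w z : state) i : inS w -> arrival i z w -> (w.1 i : nat)%:R * mu i <= q w z.
Proof.
move=> Sw h; have [h1 [h2 h3]] := rate_terms_ge0 z Sw.
rewrite /q /rate -[X in X <= _]addr0 lerD ?sumr_ge0 //.
rewrite (bigD1 i) //= h -[X in X <= _]addr0 lerD ?sumr_ge0 //.
- exact: ler_wpDl (h1 i) (lexx _).
- by move=> l _; rewrite addr_ge0.
Qed.

Lemma rate_geM (w z : state) j : inS w -> act_move j w z ->
  act_rate theta alpha beta u v j w (w.2 j) (z.2 j) <= q w z.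
Proof.
move=> Sw h; have [h1 [h2 h3]] := rate_terms_ge0 z Sw.
rewrite /q /rate -[X in X <= _]add0r lerD //.
- by apply: sumr_ge0 => l _; rewrite addr_ge0.
- by rewrite (bigD1 j) //= h -[X in X <= _]addr0 lerD // sumr_ge0.
Qed.

Definition w0 : state := ([ffun => ord0], [ffun => Idle]).
Definition Nm (w : state) := (busy w + \sum_(j < n) (w.2 j != Idle))%N.

Lemma Nm_act j (w z : state) : act_move j w z ->
  (Nm z + (w.2 j != Idle) + (w.2 j == Trans) = Nm w + (z.2 j != Idle) + (z.2 j == Trans))%N.
Proof.
move=> h; have H1 := act_busy h; have H2 := act_sum (fun a => (a != Idle : nat)) h.
rewrite /Nm /=; move: H1 H2 => /=.
set Sz := (\sum_(l < n) (z.2 l != Idle))%N.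
set Sw := (\sum_(l < n) (w.2 l != Idle))%N.
lia.
Qed.

Lemma connect_h (h : state -> R) :
  (forall w z, inS w -> inS z -> 0 < q w z -> h w = h z) ->
  forall w, inS w -> h w = h w0.
Proof.
move=> Hq; suff H: forall c w, (Nm w < c)%N -> inS w -> h w = h w0.
  by move=> w; apply: H (ltnSn _).
elim=> // c IH w Hc Sw.
case: (pickP (fun i => 0 < w.1 i)%N) => [i Hi | H0].
  pose z : state := ([ffun l => if l == i then inord (w.1 i).-1 else w.1 l], w.2).
  have arr : arrival i z w.
    rewrite /arrival eqxx andbT; apply/forallP => l; rewrite ffunE.
    case: (eqVneq l i) => [->|ne]; rewrite ?eqxx ?(negbTE ne) ?addn0 //.
    rewrite inordK; last exact: leq_ltn_trans (leq_pred _) (ltn_ord _).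
    by rewrite addn1 prednK.
  have [Hb [_ [_ E2]]] := arrival_busy arr.
  have Sz : inS z by move: Sw; rewrite /inS Hb; lia.
  have rp : 0 < q w z.
    apply: lt_le_trans (rate_geD Sw arr); by rewrite mulr_gt0 // ltr0n.
  rewrite (Hq w z Sw Sz rp); apply: IH => //.
  by move: Hc; rewrite /Nm Hb E2; lia.
case: (pickP (fun j => w.2 j == Wait)) => [j Hj | H1].
  pose z : state := (w.1, [ffun l => if l == j then Idle else w.2 l]).
  have am : act_move j w z.
    rewrite /act_move eqxx /=; apply/forallP => l; rewrite ffunE.
    by apply/implyP => /negbTE ->.
  have zj : z.2 j = Idle by rewrite ffunE eqxx.
  clearbody z.
  have Hb := act_busy am; have Hs := Nm_act am.
  rewrite zj (eqP Hj) /= in Hb Hs.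
  have Sz : inS z by move: Sw; rewrite /inS; lia.
  have rp : 0 < q w z.
    by apply: lt_le_trans (rate_geM Sw am); rewrite zj (eqP Hj) /=.
  rewrite (Hq w z Sw Sz rp); apply: IH => //.
  by move: Hc; lia.
case: (pickP (fun j => w.2 j == Trans)) => [j Hj | H2].
  pose z : state := (w.1, [ffun l => if l == j then Wait else w.2 l]).
  have am : act_move j w z.
    rewrite /act_move eqxx /=; apply/forallP => l; rewrite ffunE.
    by apply/implyP => /negbTE ->.
  have zj : z.2 j = Wait by rewrite ffunE eqxx.
  clearbody z.
  have Hb := act_busy am; have Hs := Nm_act am.
  rewrite zj (eqP Hj) /= in Hb Hs.
  have Sz : inS z by move: Sw; rewrite /inS; lia.
  have rp : 0 < q w z.
    by apply: lt_le_trans (rate_geM Sw am); rewrite zj (eqP Hj) /=.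
  rewrite (Hq w z Sw Sz rp); apply: IH => //.
  by move: Hc; lia.
have -> : w = w0; last by [].
case: w H0 H1 H2 {Hc Sw} => x a H0 H1 H2; congr pair; apply/ffunP => l; rewrite ffunE.
  by apply: val_inj => /=; move: (H0 l) => /=; case: (x l) => [[|]].
by move: (H1 l) (H2 l) => /=; case: (a l).
Qed.

Lemma S0 : inS w0.
Proof. by rewrite /inS /busy !big1 // => i _; rewrite ffunE. Qed.

Definition Z := \sum_(w : state | inS w) wt w.

Lemma Zpos : 0 < Z.
Proof.
rewrite /Z (bigD1 w0) ?S0 //=; apply: lt_le_trans (wt_gt0 S0) _.
by rewrite lerDl sumr_ge0 // => w /andP[Sw _]; exact: ltW (wt_gt0 Sw).
Qed.

Lemma DBs (w z : state) : wt w * q w z = wt z * q z w.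
Proof.
apply: DB => i; apply: lt0r_neq0; by [apply: lp|apply: mp|apply: ap|apply: bp|apply: up|apply: vp].
Qed.

Lemma formula_stat (p : state -> R) :
  (forall w, inS w -> p w = normconst m theta lambda mu alpha beta u v * wt w) ->
  stationary theta lambda mu alpha beta u v p.
Proof.
move=> Hp; have Z0 := lt0r_neq0 Zpos.
split; first split.
- move=> w Sw; rewrite Hp // mulr_ge0 ?(ltW (wt_gt0 Sw)) //.
  by rewrite /normconst invr_ge0 ltW // Zpos.
- rewrite (eq_bigr (fun w => normconst m theta lambda mu alpha beta u v * wt w)) //.
  by rewrite -mulr_sumr /normconst mulVf.
- move=> w Sw; rewrite mulr_sumr; apply: eq_bigr => z /andP[Sz _].
  by rewrite (Hp w Sw) (Hp z Sz) -[_ * wt w * _]mulrA -[_ * wt z * _]mulrA DBs.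
Qed.

Lemma stat_formula (p : state -> R) :
  stationary theta lambda mu alpha beta u v p ->
  (forall w, inS w -> p w = normconst m theta lambda mu alpha beta u v * wt w).
Proof.
move=> [[nn sum1] bal].
have Z0 := lt0r_neq0 Zpos.
pose h (w : state) := p w / wt w.
have pE : forall w, inS w -> p w = h w * wt w.
  by move=> w Sw; rewrite /h divfK // lt0r_neq0 // wt_gt0.
pose c (w z : state) := wt w * q w z.
have bal' : forall w, inS w -> \sum_(z | inS z) c w z * (h w - h z) = 0.
  move=> w Sw; rewrite (bigD1 w) //= subrr mulr0 add0r.
  have -> : \sum_(z | inS z && (z != w)) c w z * (h w - h z) =
     p w * (\sum_(z | inS z && (z != w)) q w z)
     - \sum_(z | inS z && (z != w)) p z * q z w.
    rewrite mulr_sumr -sumrB; apply: eq_bigr => z /andP[Sz _].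
    rewrite /c (pE w Sw) (pE z Sz) -[h z * wt z * q z w]mulrA -(DBs w z); ring.
  by rewrite bal // subrr.
have T1 : \sum_(w | inS w) \sum_(z | inS z) c w z * (h w - h z) * h w = 0.
  by rewrite big1 // => w Sw; rewrite -mulr_suml bal' // mul0r.
have T2 : \sum_(w | inS w) \sum_(z | inS z) c w z * (h w - h z) * h z = 0.
  rewrite exchange_big big1 // => z Sz.
  rewrite (eq_bigr (fun w => - (c z w * (h z - h w)) * h z)); last first.
    by move=> w _; rewrite /c DBs; ring.
  by rewrite -mulr_suml sumrN bal' // oppr0 mul0r.
have D : \sum_(w | inS w) \sum_(z | inS z) c w z * (h w - h z) ^+ 2 = 0.
  rewrite -[RHS](subrr 0).
  rewrite -[X in _ = X - _]T1 -[X in _ = _ - X]T2 -sumrB; apply: eq_bigr => w _.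
  rewrite -sumrB; apply: eq_bigr => z _; ring.
have cnn : forall w z, inS w -> 0 <= c w z.
  by move=> w z Sw; rewrite mulr_ge0 ?(ltW (wt_gt0 Sw)) // rate_ge0.
have edge : forall w z, inS w -> inS z -> 0 < q w z -> h w = h z.
  move=> w z Sw Sz qp.
  have D1 := psumr_eq0P (fun w Sw => sumr_ge0 _ (fun z _ => mulr_ge0 (cnn w z Sw) (sqr_ge0 (h w - h z)))) D Sw.
  have := psumr_eq0P (fun z _ => mulr_ge0 (cnn w z Sw) (sqr_ge0 (h w - h z))) D1 Sz.
  move/eqP; rewrite mulf_eq0 /c mulf_eq0 (negbTE (lt0r_neq0 qp)) (negbTE (lt0r_neq0 (wt_gt0 Sw))) /=.
  by rewrite sqrf_eq0 subr_eq0 => /eqP.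
have hc := connect_h edge.
have e : h w0 * Z = 1.
  rewrite -sum1 /Z mulr_sumr; apply: eq_bigr => w Sw; by rewrite (pE w Sw) (hc w Sw).
move=> w Sw; rewrite (pE w Sw) (hc w Sw) /normconst -/Z; congr (_ * _).
by rewrite -[h w0](mulfK Z0) e mul1r.
Qed.

Lemma main_sec :
  reversible m theta lambda mu alpha beta u v /\
  (forall p : state -> R,
     stationary theta lambda mu alpha beta u v p <->
     (forall w, inS w ->
        p w = normconst m theta lambda mu alpha beta u v * wt w)).
Proof.
split.
- exists (fun w => normconst m theta lambda mu alpha beta u v * wt w).
  have [pm _] := formula_stat (p := fun w => normconst m theta lambda mu alpha beta u v * wt w)
    (fun w _ => erefl).
  split; first exact: pm.
  move=> w z Sw Sz /=.
  by rewrite -[_ * wt w * _]mulrA -[_ * wt z * _]mulrA DBs.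
- move=> p; split; first exact: stat_formula.
  exact: formula_stat.
Qed.

End Main.

Unset Implicit Arguments.

Theorem theorem2 (m k n : nat) (R : realFieldType)
  (theta : nat -> R) (lambda mu : 'I_k -> R) (alpha beta u v : 'I_n -> R) :
  (0 < m)%N -> (0 < k)%N -> (0 < n)%N ->
  (forall i, 0 < lambda i) -> (forall i, 0 < mu i) ->
  (forall j, 0 < alpha j) -> (forall j, 0 < beta j) ->
  (forall j, 0 < u j) -> (forall j, 0 < v j) ->
  (forall b, (b <= m)%N -> 0 <= theta b <= 1) ->
  (forall b, (b < m)%N -> 0 < theta b) ->
  theta m = 0 ->
  reversible m theta lambda mu alpha beta u v /\
  (forall p : state m k n -> R,
     stationary theta lambda mu alpha beta u v p <->
     (forall w, inS w ->
        p w = normconst m theta lambda mu alpha beta u v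
              * weight theta lambda mu alpha beta u v w)).
Proof.
move=> _ _ _ lp mp ap bp up vp th01 thp _.
by apply: main_sec.
Qed.
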